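(* Let $p,d\ge 1$ be integers and let $0<u\le v$ be real numbers with $uv=1$. Let $W\in\mathbb{R}^{p\times d}$ and $\Omega_c\in\mathbb{S}_{++}^d$ be fixed, and let $W\Omega_cW^T$ be eigendecomposed as $Q\,\mathrm{diag}(\mathbf{r})\,Q^T$ with $Q$ orthogonal and $\mathbf{r}\in\mathbb{R}^p$. Then an optimal solution of the problem \[ \min_{\Omega_r}\ \operatorname{tr}(\Omega_r W\Omega_c W^T) - d\log\det(\Omega_r)\quad\text{subject to}\quad uI_p\preceq \Omega_r\preceq vI_p \] is given by $Q\,\mathrm{diag}\big(\mathbb{T}_{[u,v]}(d/\mathbf{r})\big)\,Q^T$.
   Context: $\mathbb{S}_{++}^d$ denotes real symmetric positive definite $d\times d$ matrices and $\preceq$ the Loewner order; the optimization is over symmetric positive definite $\Omega_r$. The thresholding function is $\mathbb{T}_{[u,v]}(x)=\max\{u,\min\{v,x\}\}$, and $\mathbb{T}_{[u,v]}(d/\mathbf{r})$ is the vector whose $i$-th entry is $\mathbb{T}_{[u,v]}(d/r_i)$ (with the convention $d/0=+\infty$, so that a zero eigenvalue is mapped to $v$). *)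

(* Defs.v *)
From HB Require Import structures.
From mathcomp Require Import all_boot all_order all_algebra.
From mathcomp Require Import all_classical all_reals all_analysis.
Set Implicit Arguments. Unset Strict Implicit. Unset Printing Implicit Defensive.
Import Order.TTheory GRing.Theory Num.Theory.
Local Open Scope ring_scope.

Section Defs.
Variable R : realType.

Definition symmx n (A : 'M[R]_n) : Prop := A^T = A.

Definition psdmx n (A : 'M[R]_n) : Prop :=
  symmx A /\ forall x : 'cV[R]_n, 0 <= (x^T *m A *m x) 0 0.

Definition spdmx n (A : 'M[R]_n) : Prop :=
  symmx A /\ forall x : 'cV[R]_n, x != 0 -> 0 < (x^T *m A *m x) 0 0.

Definition loewner_le n (A B : 'M[R]_n) : Prop := psdmx (B - A).

Definition orthomxR n (Q : 'M[R]_n) : Prop := Q *m Q^T = 1%:M /\ Q^T *m Q = 1%:M.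

Definition thr (u v x : R) : R := Num.max u (Num.min v x).

(* T_[u,v](d / x), with the convention d/0 = +oo so that x = 0 maps to v *)
Definition thr_div (u v : R) (d : nat) (x : R) : R :=
  if x == 0 then v else thr u v (d%:R / x).

Definition objective p d (W : 'M[R]_(p, d)) (Oc : 'M[R]_d) (Om : 'M[R]_p) : R :=
  \tr (Om *m (W *m Oc *m W^T)) - d%:R * ln (\det Om).

Definition feasible p (u v : R) (Om : 'M[R]_p) : Prop :=
  spdmx Om /\ loewner_le (u%:M) Om /\ loewner_le Om (v%:M).

End Defs.

(* Main.v *)
Require Import Defs.
From HB Require Import structures.
From mathcomp Require Import all_boot all_order all_algebra.
From mathcomp Require Import all_classical all_reals all_analysis.
From mathcomp Require Import lra ring.
Import Order.TTheory GRing.Theory Num.Theory.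
Local Open Scope ring_scope.

Section H.
Variable R : realType.

Lemma quad_delta n (M : 'M[R]_n) j :
  ((delta_mx j (0:'I_1) : 'cV_n)^T *m M *m delta_mx j (0:'I_1)) 0 0 = M j j.
Proof.
rewrite trmx_delta -mulmxA -colE -rowE !mxE; done.
Qed.

Lemma quad_diag n (s : 'rV[R]_n) (y : 'cV_n) :
  (y^T *m diag_mx s *m y) 0 0 = \sum_i s 0 i * y i 0 ^+ 2.
Proof.
rewrite mul_mx_diag !mxE; apply: eq_bigr => i _; rewrite !mxE; lra.
Qed.

Lemma sqsum_gt0 n (y : 'cV[R]_n) (s : 'rV[R]_n) : (forall i, 0 < s 0 i) -> y != 0 ->
  0 < \sum_i s 0 i * y i 0 ^+ 2.
Proof.
move=> hs hy; rewrite lt_neqAle sumr_ge0 ?andbT; last first.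
  by move=> i _; rewrite mulr_ge0 ?sqr_ge0 // ltW.
rewrite eq_sym; apply/negP => /eqP /psumr_eq0P H.
have H' : forall i, y i 0 = 0.
  move=> i; have /eqP := H (fun i _ => mulr_ge0 (ltW (hs i)) (sqr_ge0 _)) i isT.
  by rewrite mulf_eq0 (gt_eqF (hs i)) /= sqrf_eq0 => /eqP.
by move/negP: hy; apply; apply/eqP/matrixP => i j; rewrite ord1 H' !mxE.
Qed.

Lemma conj_quad n (Q M : 'M[R]_n) (x : 'cV_n) :
  x^T *m (Q *m M *m Q^T) *m x = (Q^T *m x)^T *m M *m (Q^T *m x).
Proof. by rewrite trmx_mul trmxK !mulmxA. Qed.

Lemma ln_prod n (t : 'I_n -> R) : (forall i, 0 < t i) ->
  ln (\prod_i t i) = \sum_i ln (t i).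
Proof.
move=> ht.
pose K := fun x y : R => 0 < x /\ ln x = y.
have : K (\prod_i t i) (\sum_i ln (t i)).
  apply: (big_rec2 K); first by split; [exact: ltr01| exact: ln1].
  move=> i y1 y2 _ [h1 h2]; split; first by rewrite mulr_gt0.
  by rewrite lnM ?h2 // posrE.
by case.
Qed.

Lemma ln_le_sub1 (x : R) : 0 < x -> ln x <= x - 1.
Proof.
move=> hx; have := @le_ln1Dx R (x - 1); rewrite addrCA subrr addr0; apply; lra.
Qed.
End H.

Set Implicit Arguments. Unset Strict Implicit. Unset Printing Implicit Defensive.

Section H2.
Variable R : realType.
Definition PD {n} (B : 'M[R]_n) := forall x : 'cV_n, x != 0 -> 0 < (x^T *m B *m x) 0 0.

Lemma pd_diag n (B : 'M[R]_n) (j : 'I_n) : PD B -> 0 < B j j.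
Proof.
move=> h; rewrite -quad_delta; apply: h.
apply/negP => /eqP/matrixP/(_ j 0); rewrite !mxE !eqxx /=; apply/eqP; exact: oner_neq0.
Qed.

Lemma step n (B : 'M[R]_(1 + n)) : B^T = B -> PD B ->
  let a : R := ulsubmx B 0 0 in
  let b := dlsubmx B in let C := drsubmx B in
  let S := C - a^-1 *: (b *m b^T) in
  [/\ 0 < a, \det B = a * \det S, S^T = S & PD S].
Proof.
move=> hs hpd a b C S.
have ha : 0 < a.
  by rewrite /a !mxE; exact: pd_diag hpd.
have hur : ursubmx B = b^T by rewrite /b trmx_dlsub hs.
have hB : B = block_mx a%:M b^T b C by rewrite -hur -mx11_scalar submxK.
pose L : 'M[R]_(1 + n) := block_mx 1 0 (-(a^-1) *: b) 1.
have hL : L *m B *m L^T = block_mx a%:M 0 0 S.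
  rewrite hB /L tr_block_mx !mulmx_block.
  have hab : (- a^-1 *: b) *m a%:M = - b.
    by rewrite mul_mx_scalar scalerA mulrN mulfV ?gt_eqF // scaleN1r.
  rewrite hab !mul1mx addNr trmx0 trmx1 !mul0mx !mulmx0 !mulmx1 !addr0 add0r.
  rewrite (trmx1 _ n) !mulmx1 mul_scalar_mx linearZ /= scalerA mulrN mulfV ?gt_eqF // scaleN1r addNr.
  by rewrite /S addrC -scalemxAl scaleNr.
have hdetL : \det L = 1 by rewrite /L det_lblock !det1 mulr1.
have uL : L^T \in unitmx by rewrite unitmx_tr unitmxE hdetL unitr1.
split => //.
- have := congr1 determinant hL.
  by rewrite !det_mulmx det_tr hdetL mul1r mulr1 det_ublock det_scalar1.
- have hC : C^T = C by rewrite /C trmx_drsub hs.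
  by rewrite /S linearB /= linearZ /= trmx_mul trmxK hC.
move=> y hy.
pose z : 'cV[R]_(1 + n) := col_mx 0 y.
have hz : L^T *m z != 0.
  apply/negP => /eqP h0.
  have : z == 0 by rewrite -(mulKmx uL z) h0 mulmx0.
  by rewrite /z col_mx_eq0 (negbTE hy) andbF.
have := hpd _ hz.
have -> : (L^T *m z)^T *m B *m (L^T *m z) = z^T *m (L *m B *m L^T) *m z.
  by rewrite trmx_mul trmxK !mulmxA.
rewrite hL /z tr_col_mx mul_row_block mul_row_col trmx0 !mul0mx !add0r.
by rewrite !mulmx0 add0r.
Qed.

Lemma hstep n (B : 'M[R]_(1 + n)) :
  (forall B : 'M[R]_n, B^T = B -> PD B -> 0 < \det B /\ \det B <= \prod_i B i i) ->
  B^T = B -> PD B -> 0 < \det B /\ \det B <= \prod_i B i i.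
Proof.
move=> IH hs hpd.
have [ha hdet hS hpdS] := step hs hpd.
move: ha hdet hS hpdS.
set a := ulsubmx B 0 0; set b := dlsubmx B; set C := drsubmx B.
set S := C - _ => ha hdet hS hpdS.
have [h1 h2] := IH _ hS hpdS.
rewrite hdet; split; first by rewrite mulr_gt0.
rewrite big_ord_recl.
have -> : B ord0 ord0 = a by rewrite /a !mxE; congr (B _ _); apply: val_inj.
rewrite ler_pM2l //; apply: (le_trans h2); apply: ler_prod => i _.
rewrite (ltW (pd_diag i hpdS)) /=.
have -> : B (lift ord0 i) (lift ord0 i) = C i i.
  by rewrite /C !mxE; congr (B _ _); apply: val_inj.
rewrite /S !mxE gerBl mulr_ge0 ?invr_ge0 ?(ltW ha) //.
by apply: sumr_ge0 => k _; rewrite !mxE -expr2 sqr_ge0.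
Qed.
Lemma hadamard n (B : 'M[R]_n) : B^T = B -> PD B ->
  0 < \det B /\ \det B <= \prod_i B i i.
Proof.
elim: n B => [|n IH] B hs hpd.
  by rewrite det_mx00 big_ord0 ltr01 lexx.
exact: (hstep IH).
Qed.
End H2.

Section H3.
Variable R : realType.

Lemma thr_bnd (u v x : R) : u <= v -> u <= thr u v x <= v.
Proof. by move=> huv; rewrite /thr le_max lexx /= ge_max huv /= ge_min lexx ?orbT. Qed.

Lemma thr_div_bnd (u v : R) d x : u <= v -> u <= thr_div u v d x <= v.
Proof. by move=> huv; rewrite /thr_div; case: eqP => _; [rewrite huv lexx|exact: thr_bnd]. Qed.

Lemma key_sign (u v r x : R) (d : nat) : 0 < u -> u <= v -> (0 < d)%N -> 0 <= r -> u <= x <= v ->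
  0 <= (x - thr_div u v d r) * (r - d%:R / thr_div u v d r).
Proof.
move=> hu huv hd hr /andP [hx1 hx2].
have hd' : 0 < d%:R :> R by rewrite ltr0n.
rewrite /thr_div; case: eqP => [->|/eqP r0].
  apply: mulr_le0; first by rewrite subr_le0.
  by rewrite sub0r oppr_le0 divr_ge0 // ltW // (lt_le_trans hu huv).
have rp : 0 < r by rewrite lt_neqAle eq_sym r0.
set y := d%:R / r.
have hy : r * y = d%:R by rewrite /y mulrC -mulrA mulVf // mulr1.
have yp : 0 < y by rewrite divr_gt0.
rewrite /thr.
have [yu|uy] := leP y u.
  rewrite (min_r (le_trans yu huv)) (max_l yu).
  apply: mulr_ge0; first by rewrite subr_ge0.
  have : 0 <= u * (r - d%:R / u).
    by rewrite mulrBr mulrCA mulfV ?gt_eqF // mulr1 -hy subr_ge0 [u * r]mulrC ler_pM2l.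
  by rewrite pmulr_rge0.
have [vy|yv] := leP v y.
  rewrite (max_r huv).
  apply: mulr_le0; first by rewrite subr_le0.
  have : u <= v := huv.
  have vp : 0 < v := lt_le_trans hu huv.
  have : v * (r - d%:R / v) <= 0.
    by rewrite mulrBr mulrCA mulfV ?gt_eqF // mulr1 -hy subr_le0 mulrC ler_pM2l.
  by rewrite pmulr_rle0.
rewrite (max_r (ltW uy)).
have -> : d%:R / y = r by rewrite -hy mulrK // unitfE gt_eqF.
by rewrite subrr mulr0.
Qed.

Lemma scal (u v r x : R) (d : nat) : 0 < u -> u <= v -> (0 < d)%N -> 0 <= r -> u <= x <= v ->
  thr_div u v d r * r - d%:R * ln (thr_div u v d r) <= x * r - d%:R * ln x.
Proof.
move=> hu huv hd hr hx.
have := key_sign hu huv hd hr hx; set t := thr_div u v d r => hk.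
have /andP [ht1 ht2] : u <= t <= v by exact: thr_div_bnd.
have tp : 0 < t := lt_le_trans hu ht1.
have xp : 0 < x := lt_le_trans hu (proj1 (andP hx)).
have hl : ln x - ln t <= x / t - 1.
  rewrite -ln_div ?posrE //; apply: ln_le_sub1; exact: divr_gt0.
have hd' : 0 <= d%:R :> R by [].
have : d%:R * (ln x - ln t) <= d%:R * (x / t - 1) by rewrite ler_wpM2l.
have -> : d%:R * (x / t - 1) = (x - t) * (d%:R / t).
  by field; rewrite gt_eqF.
move: hk; rewrite mulrBr.
lra.
Qed.
End H3.

Section H4.
Variable R : realType.

Lemma qsq n (Q : 'M[R]_n) (a : R) : Q *m Q^T = 1%:M -> Q *m a%:M *m Q^T = a%:M.
Proof. by move=> hQ; rewrite mul_mx_scalar -scalemxAl hQ scalemx1. Qed.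

Lemma diag_psd n (Q : 'M[R]_n) (s : 'rV[R]_n) : (forall i, 0 <= s 0 i) ->
  psdmx (Q *m diag_mx s *m Q^T).
Proof.
move=> hs; split.
  by rewrite /symmx !trmx_mul trmxK tr_diag_mx mulmxA.
move=> x; rewrite conj_quad quad_diag; apply: sumr_ge0 => i _.
by rewrite mulr_ge0 ?sqr_ge0.
Qed.

Lemma diag_pd n (Q : 'M[R]_n) (s : 'rV[R]_n) : Q *m Q^T = 1%:M -> (forall i, 0 < s 0 i) ->
  spdmx (Q *m diag_mx s *m Q^T).
Proof.
move=> hQ hs; split.
  by rewrite /symmx !trmx_mul trmxK tr_diag_mx mulmxA.
move=> x hx; rewrite conj_quad quad_diag; apply: sqsum_gt0 => //.
apply/negP => /eqP h0; move/negP: hx; apply.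
by rewrite -[x]mul1mx -hQ -mulmxA h0 mulmx0.
Qed.

Lemma psd_diag_ge0 n (M : 'M[R]_n) i : psdmx M -> 0 <= M i i.
Proof. by move=> [_ h]; rewrite -quad_delta. Qed.

Lemma psd_congr n (Q M : 'M[R]_n) : psdmx M -> psdmx (Q^T *m M *m Q).
Proof.
move=> [hs h]; split.
  by rewrite /symmx !trmx_mul trmxK hs mulmxA.
by move=> x; have := conj_quad _ _ Q^T M x; rewrite trmxK => ->; apply: h.
Qed.

Lemma pd_congr n (Q M : 'M[R]_n) : Q^T *m Q = 1%:M -> spdmx M -> PD (Q^T *m M *m Q).
Proof.
move=> hQ [hs h] x hx; have := conj_quad _ _ Q^T M x; rewrite trmxK => ->; apply: h.
apply/negP => /eqP h0; move/negP: hx; apply.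
by rewrite -[x]mul1mx -hQ -mulmxA h0 mulmx0.
Qed.


Lemma qsq' n (Q : 'M[R]_n) (a : R) : Q^T *m Q = 1%:M -> Q^T *m a%:M *m Q = a%:M.
Proof. by move=> hQ; rewrite mul_mx_scalar -scalemxAl hQ scalemx1. Qed.

Lemma obj_formula p d (W : 'M[R]_(p,d)) (Oc : 'M[R]_d) (Q : 'M[R]_p) (r : 'rV[R]_p) (Om : 'M[R]_p) : Q^T *m Q = 1%:M ->
  W *m Oc *m W^T = Q *m diag_mx r *m Q^T ->
  objective W Oc Om = \sum_i (Q^T *m Om *m Q) i i * r 0 i - d%:R * ln (\det (Q^T *m Om *m Q)).
Proof.
move=> hQ' hdec; rewrite /objective hdec.
have hdQ : \det Q^T * \det Q = 1 by rewrite -det_mulmx hQ' det1.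
congr (_ - _ * ln _); last by rewrite !det_mulmx mulrAC hdQ mul1r.
rewrite !mulmxA mxtrace_mulC !mulmxA /mxtrace; apply: eq_bigr => i _.
by rewrite mul_mx_diag !mxE.
Qed.
End H4.

Theorem corollary1 (R : realType) (p d : nat) (hp : (0 < p)%N) (hd : (0 < d)%N)
    (u v : R) (hu : 0 < u) (huv : u <= v) (huv1 : u * v = 1)
    (W : 'M[R]_(p, d)) (Oc : 'M[R]_d) (hOc : spdmx Oc)
    (Q : 'M[R]_p) (r : 'rV[R]_p) (hQ : orthomxR Q)
    (hdec : W *m Oc *m W^T = Q *m diag_mx r *m Q^T) :
  let Ostar := Q *m diag_mx (\row_i thr_div u v d (r 0 i)) *m Q^T in
  feasible u v Ostar /\
  forall Om : 'M[R]_p, feasible u v Om ->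
    objective W Oc Ostar <= objective W Oc Om.
Proof.
move=> Ostar.
have [hQ1 hQ'] := hQ.
set t := \row_i thr_div u v d (r 0 i).
have ht : forall i, u <= t 0 i <= v by move=> i; rewrite mxE; apply: thr_div_bnd.
have htp : forall i, 0 < t 0 i.
  by move=> i; have /andP[h _] := ht i; exact: lt_le_trans hu h.
have hr : forall i, 0 <= r 0 i.
  move=> i.
  have -> : r 0 i = (Q^T *m (W *m Oc *m W^T) *m Q) i i.
    by rewrite hdec !mulmxA hQ' mul1mx -mulmxA hQ' mulmx1 mxE eqxx mulr1n.
  apply: psd_diag_ge0; apply: psd_congr.
  split.
    by rewrite /symmx !trmx_mul trmxK (proj1 hOc) mulmxA.
  move=> x.
  have -> : x^T *m (W *m Oc *m W^T) *m x = (W^T *m x)^T *m Oc *m (W^T *m x).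
    by rewrite trmx_mul trmxK !mulmxA.
  case: (eqVneq (W^T *m x) 0) => [->|hx]; first by rewrite mulmx0 !mxE.
  by apply: ltW; apply: (proj2 hOc).
split.
  split; first exact: diag_pd.
  split.
    rewrite /loewner_le.
    have -> : Ostar - u%:M = Q *m diag_mx (t - const_mx u) *m Q^T.
      by rewrite linearB /= diag_const_mx mulmxBr mulmxBl qsq.
    by apply: diag_psd => i; move: (ht i); rewrite !mxE subr_ge0 => /andP[].
  rewrite /loewner_le.
  have -> : v%:M - Ostar = Q *m diag_mx (const_mx v - t) *m Q^T.
    by rewrite linearB /= diag_const_mx mulmxBr mulmxBl qsq.
  by apply: diag_psd => i; move: (ht i); rewrite !mxE subr_ge0 => /andP[].
move=> Om [[hs hpd] [hl1 hl2]].
rewrite (obj_formula Om hQ' hdec) (obj_formula Ostar hQ' hdec).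
have -> : Q^T *m Ostar *m Q = diag_mx t.
  by rewrite /Ostar !mulmxA hQ' mul1mx -mulmxA hQ' mulmx1.
set B := Q^T *m Om *m Q.
have hBs : B^T = B by rewrite /B !trmx_mul trmxK hs mulmxA.
have hBpd : PD B := pd_congr hQ' (conj hs hpd).
have [hdet1 hdet2] := hadamard hBs hBpd.
have hBu : forall i, u <= B i i.
  move=> i; have := psd_diag_ge0 i (psd_congr Q hl1).
  by rewrite mulmxBr mulmxBl qsq' // !mxE eqxx mulr1n subr_ge0.
have hBv : forall i, B i i <= v.
  move=> i; have := psd_diag_ge0 i (psd_congr Q hl2).
  by rewrite mulmxBr mulmxBl qsq' // !mxE eqxx mulr1n subr_ge0.
have hBp : forall i, 0 < B i i by move=> i; exact: lt_le_trans hu (hBu i).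
have hln : ln (\det B) <= \sum_i ln (B i i).
  rewrite -ln_prod // ler_ln ?posrE //; exact: prodr_gt0.
rewrite det_diag ln_prod //.
apply: (@le_trans _ _ (\sum_i B i i * r 0 i - d%:R * \sum_i ln (B i i))); last first.
  by rewrite lerD2l lerN2 ler_wpM2l.
rewrite !mulr_sumr -!sumrB; apply: ler_sum => i _.
rewrite !mxE eqxx mulr1n.
apply: scal => //; by move: (hBu i) (hBv i); rewrite /B !mxE => -> ->.
Qed.
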